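(* Let $\Gamma=(V,E,\mathbf I)$ be a connected locally finite graph with $E\ne\emptyset$ and let $G\le\mathrm{Aut}\,\Gamma$ be such that $\Gamma$ is $G$-vertex-rotary, of valency $k$ and edge-multiplicity $\lambda$. Let $\alpha,\beta$ be adjacent vertices, $e$ an edge incident with both, $H=G_\alpha$, $J=G_e$. Then (a) $\Gamma\cong\mathrm{Cos}(G,H,J)$, and $G=\langle a,z\rangle$ where $H=\langle a\rangle\cong\mathbb Z_{k\lambda}$, $H\cap H^z=\langle a^k\rangle\cong\mathbb Z_\lambda$, $J=\langle z\rangle\cong\mathbb Z_2$ and $H\cap J=1$; (b) $z\notin\langle a\rangle$, $z^a\notin\langle a\rangle$, $(a,z)$ is a rotary pair for $G$, and $G$ acts regularly on the set of arcs of $\Gamma$.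
   Context: Graphs are triples $(V,E,\mathbf I)$, each edge incident with exactly two distinct vertices, multiple edges allowed. $\Gamma$ is $G$-vertex-rotary if $G$ is arc-transitive on $\Gamma$ and the stabiliser $G_\alpha$ of a vertex $\alpha$ induces a transitive cyclic group on the set $E(\alpha)$ of edges incident with $\alpha$. A rotary pair for a group $G$ is an ordered pair $(a,z)$ of elements with $G=\langle a,z\rangle$, $|a|$ finite, $|z|=2$ and $z\notin\langle a\rangle$. $\mathrm{Cos}(G,H,J)$: vertices $\{Hx\}$, edges $\{Jy\}$, $Hx$ incident with $Jy$ iff $yx^{-1}\in JH$. *)

(* Defs.v *)
(* Groups may be infinite, so we use an
   abstract group (carrier type with operations and axioms) acting faithfully
   on a (multi)graph; this is exactly a subgroup G <= Aut Gamma. *)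
From Stdlib Require Import List Relations.
Import ListNotations.

Record group := Group {
  gcar :> Type;
  gmul : gcar -> gcar -> gcar;
  gone : gcar;
  ginv : gcar -> gcar;
  gmulA : forall x y z, gmul x (gmul y z) = gmul (gmul x y) z;
  gmul1l : forall x, gmul gone x = x;
  gmul1r : forall x, gmul x gone = x;
  gmulVl : forall x, gmul (ginv x) x = gone;
  gmulVr : forall x, gmul x (ginv x) = gone
}.
Arguments gmul {g}. Arguments gone {g}. Arguments ginv {g}.

Fixpoint gpow {G : group} (x : G) (n : nat) : G :=
  match n with O => gone | S m => gmul (gpow x m) x end.

(* x has order n (n finite, positive): <x> is cyclic of order n, i.e. <x> ~ Z_n *)
Definition has_order {G : group} (x : G) (n : nat) : Prop :=
  0 < n /\ gpow x n = gone /\ forall m, 0 < m < n -> gpow x m <> gone.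

Definition subgroup {G : group} (K : G -> Prop) : Prop :=
  K gone /\ (forall x y, K x -> K y -> K (gmul x y)) /\ (forall x, K x -> K (ginv x)).

Definition gen {G : group} (S : G -> Prop) : G -> Prop :=
  fun x => forall K, subgroup K -> (forall y, S y -> K y) -> K x.

Definition cyc {G : group} (a : G) : G -> Prop := gen (fun y => y = a).
Definition gen2 {G : group} (a z : G) : G -> Prop := gen (fun y => y = a \/ y = z).

Definition set_eq {T : Type} (A B : T -> Prop) : Prop := forall x, A x <-> B x.
Definition setI {T : Type} (A B : T -> Prop) : T -> Prop := fun x => A x /\ B x.

Definition conjg {G : group} (x g : G) : G := gmul (ginv g) (gmul x g).
Definition conjS {G : group} (H : G -> Prop) (g : G) : G -> Prop :=
  fun y => exists h, H h /\ y = conjg h g.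

Definition rotary_pair (G : group) (a z : G) : Prop :=
  (forall g : G, gen2 a z g) /\ (exists n, has_order a n) /\ has_order z 2 /\ ~ cyc a z.

Record graph := Graph {
  Vx : Type;
  Ed : Type;
  inc : Vx -> Ed -> Prop;
  inc_two : forall e, exists u v, u <> v /\ inc u e /\ inc v e /\
                       forall w, inc w e -> w = u \/ w = v
}.
Arguments inc {g}.

Definition adj {Gm : graph} (u v : Vx Gm) : Prop :=
  u <> v /\ exists e, inc u e /\ inc v e.

Definition connected (Gm : graph) : Prop :=
  forall u v : Vx Gm, clos_refl_trans _ adj u v.

Definition locally_finite (Gm : graph) : Prop :=
  forall v : Vx Gm, exists l : list (Ed Gm), forall e, inc v e -> In e l.

Definition has_card {T : Type} (P : T -> Prop) (n : nat) : Prop :=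
  exists l : list T, NoDup l /\ length l = n /\ forall x, P x <-> In x l.

Definition valency (Gm : graph) (k : nat) : Prop :=
  forall v : Vx Gm, has_card (fun u => adj v u) k.
Definition edge_multiplicity (Gm : graph) (lam : nat) : Prop :=
  forall u v : Vx Gm, adj u v -> has_card (fun e => inc u e /\ inc v e) lam.

Record aut_action (Gm : graph) (G : group) := AutAction {
  actV : Vx Gm -> G -> Vx Gm;
  actE : Ed Gm -> G -> Ed Gm;
  actV1 : forall v, actV v gone = v;
  actVM : forall v g h, actV v (gmul g h) = actV (actV v g) h;
  actE1 : forall e, actE e gone = e;
  actEM : forall e g h, actE e (gmul g h) = actE (actE e g) h;
  act_inc : forall v e g, inc v e <-> inc (actV v g) (actE e g);
  act_faithful : forall g, (forall v, actV v g = v) -> (forall e, actE e g = e) -> g = gone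
}.
Arguments actV {Gm G}. Arguments actE {Gm G}.

Section Act.
Context {Gm : graph} {G : group} (A : aut_action Gm G).

Definition vstab (v : Vx Gm) : G -> Prop := fun g => actV A v g = v.
Definition estab (e : Ed Gm) : G -> Prop := fun g => actE A e g = e.

(* arcs are incident vertex-edge pairs (v, e) *)
Definition arc_transitive : Prop :=
  forall v e v' e', inc v e -> inc v' e' ->
    exists g : G, actV A v g = v' /\ actE A e g = e'.

Definition arc_regular : Prop :=
  forall v e v' e', inc v e -> inc v' e' ->
    exists g : G, (actV A v g = v' /\ actE A e g = e') /\
      forall g' : G, actV A v g' = v' /\ actE A e g' = e' -> g' = g.

(* G_v induces on E(v) a transitive cyclic permutation group *)
Definition vertex_rotary : Prop :=
  arc_transitive /\
  forall v : Vx Gm,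
    (forall e e', inc v e -> inc v e' -> exists h, vstab v h /\ actE A e h = e') /\
    (exists c, vstab v c /\ forall h, vstab v h ->
        exists d, cyc c d /\ forall e, inc v e -> actE A e h = actE A e d).
End Act.

Definition rcoset {G : group} (H : G -> Prop) (x : G) : G -> Prop :=
  fun g => exists h, H h /\ g = gmul h x.

Definition cos_inc {G : group} (H J : G -> Prop) (S T : G -> Prop) : Prop :=
  exists x y, S = rcoset H x /\ T = rcoset J y /\
    exists j h, J j /\ H h /\ gmul y (ginv x) = gmul j h.

Definition iso_Cos (Gm : graph) (G : group) (H J : G -> Prop) : Prop :=
  exists (fV : Vx Gm -> (G -> Prop)) (fE : Ed Gm -> (G -> Prop)),
    (forall u v, fV u = fV v -> u = v) /\
    (forall v, exists x, fV v = rcoset H x) /\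
    (forall x, exists v, fV v = rcoset H x) /\
    (forall e e', fE e = fE e' -> e = e') /\
    (forall e, exists y, fE e = rcoset J y) /\
    (forall y, exists e, fE e = rcoset J y) /\
    (forall v e, inc v e <-> cos_inc H J (fV v) (fE e)).

(* Main.v *)
Require Import Defs.
From Stdlib Require Import List Relations Arith Lia Classical FunctionalExtensionality PropExtensionality.
Import ListNotations.
Arguments gmulA {g}. Arguments gmul1l {g}. Arguments gmul1r {g}. Arguments gmulVl {g}. Arguments gmulVr {g}.

Lemma gmul_cancel_l {G : group} (x y w : G) : gmul x y = gmul x w -> y = w.
Proof. intro E. rewrite <- (gmul1l y), <- (gmul1l w), <- (gmulVl x), <- !gmulA, E. reflexivity. Qed.

Lemma gmul_cancel_r {G : group} (x y w : G) : gmul y x = gmul w x -> y = w.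
Proof. intro E. rewrite <- (gmul1r y), <- (gmul1r w), <- (gmulVr x), !gmulA, E. reflexivity. Qed.

Lemma ginv_unique {G : group} (x y : G) : gmul x y = gone -> ginv x = y.
Proof. intro E. apply (gmul_cancel_l x). rewrite gmulVr, E. reflexivity. Qed.

Lemma ginv_mul {G : group} (x y : G) : ginv (gmul x y) = gmul (ginv y) (ginv x).
Proof. apply ginv_unique. rewrite <- gmulA, (gmulA y), gmulVr, gmul1l, gmulVr. reflexivity. Qed.

Lemma ginv_inv {G : group} (x : G) : ginv (ginv x) = x.
Proof. apply ginv_unique. apply gmulVl. Qed.

Lemma ginv_one {G : group} : ginv (@gone G) = gone.
Proof. apply ginv_unique. apply gmul1l. Qed.

Lemma gpow_add {G : group} (x : G) m n : gpow x (m + n) = gmul (gpow x m) (gpow x n).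
Proof. induction n; simpl. rewrite Nat.add_0_r, gmul1r. reflexivity.
  rewrite Nat.add_succ_r. simpl. rewrite IHn, gmulA. reflexivity. Qed.

Lemma gpow_one {G : group} n : gpow (@gone G) n = gone.
Proof. induction n; simpl; [reflexivity|]. rewrite IHn, gmul1l. reflexivity. Qed.

Lemma gpow_mul {G : group} (x : G) m n : gpow x (m * n) = gpow (gpow x m) n.
Proof. induction n; simpl. rewrite Nat.mul_0_r. reflexivity.
  rewrite Nat.mul_succ_r, gpow_add, IHn. reflexivity. Qed.

Lemma gpow_comm {G : group} (x : G) m n : gmul (gpow x m) (gpow x n) = gmul (gpow x n) (gpow x m).
Proof. rewrite <- !gpow_add, Nat.add_comm. reflexivity. Qed.

Lemma gpow_mod {G : group} (x : G) N n : gpow x N = gone -> gpow x n = gpow x (n mod N).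
Proof. intro HN. destruct N as [|N']. simpl. reflexivity.
  rewrite (Nat.div_mod_eq n (S N')) at 1. rewrite gpow_add, gpow_mul, HN, gpow_one, gmul1l. reflexivity. Qed.

Lemma gen_sub {G : group} (S : G -> Prop) : subgroup (gen S).
Proof. unfold gen. repeat split.
  - intros K [H1 _] _. exact H1.
  - intros x y Hx Hy K HK HS. pose proof HK as [_ [HM _]]. apply HM; [apply Hx|apply Hy]; auto.
  - intros x Hx K HK HS. pose proof HK as [_ [_ HI]]. apply HI. apply Hx; auto.
Qed.

Lemma gen_incl {G : group} (S : G -> Prop) y : S y -> gen S y.
Proof. intros Hy K _ HS. auto. Qed.

Lemma gen_min {G : group} (S K : G -> Prop) : subgroup K -> (forall y, S y -> K y) -> forall x, gen S x -> K x.
Proof. intros HK HS x Hx. apply Hx; auto. Qed.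

Lemma sub_pow {G : group} (K : G -> Prop) x n : subgroup K -> K x -> K (gpow x n).
Proof. intros [H1 [HM _]] Hx. induction n; simpl; auto. Qed.

Lemma cyc_pow {G : group} (x : G) n : cyc x (gpow x n).
Proof. apply sub_pow. apply gen_sub. apply gen_incl. reflexivity. Qed.

Lemma cyc_comm {G : group} (x u w : G) : cyc x u -> cyc x w -> gmul u w = gmul w u.
Proof.
  assert (C1 : forall y, cyc x y -> gmul x y = gmul y x).
  { apply (gen_min _ (fun y => gmul x y = gmul y x)). repeat split.
    - rewrite gmul1l, gmul1r. reflexivity.
    - intros p q Hp Hq. rewrite gmulA, Hp, <- gmulA, Hq, gmulA. reflexivity.
    - intros p Hp. apply (gmul_cancel_l p). rewrite gmulA, <- Hp, <- gmulA, gmulVr, gmul1r, gmulA, gmulVr, gmul1l. reflexivity.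
    - intros y ->. reflexivity. }
  assert (C2 : forall y, cyc x y -> forall w, cyc x w -> gmul y w = gmul w y).
  { apply (gen_min _ (fun y => forall w, cyc x w -> gmul y w = gmul w y)). repeat split.
    - intros; rewrite gmul1l, gmul1r. reflexivity.
    - intros p q Hp Hq w0 Hw. rewrite <- gmulA, Hq, gmulA, Hp, gmulA; auto.
    - intros p Hp w0 Hw. apply (gmul_cancel_l p). rewrite gmulA, gmulVr, gmul1l, gmulA, (Hp w0 Hw), <- gmulA, gmulVr, gmul1r; reflexivity.
    - intros y -> w0 Hw. apply C1. exact Hw. }
  intros; apply C2; auto.
Qed.

Lemma cyc_char {G : group} (x : G) N y : has_order x N -> cyc x y -> exists i, i < N /\ y = gpow x i.
Proof.
  intros [HN [HxN _]]. apply (gen_min _ (fun y => exists i, i < N /\ y = gpow x i)).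
  - repeat split.
    + exists 0. split; [lia|reflexivity].
    + intros p q [i [Hi ->]] [j [Hj ->]]. exists ((i + j) mod N). split. apply Nat.mod_upper_bound; lia.
      rewrite <- gpow_add. apply gpow_mod; auto.
    + intros p [i [Hi ->]]. exists ((N - i) mod N). split. apply Nat.mod_upper_bound; lia.
      rewrite <- gpow_mod by auto. apply ginv_unique. rewrite <- gpow_add.
      replace (i + (N - i)) with N by lia. exact HxN.
  - intros y0 ->. exists (1 mod N). split. apply Nat.mod_upper_bound; lia.
    rewrite <- gpow_mod by auto. simpl. rewrite gmul1l. reflexivity.
Qed.
Lemma actV_inv1 {Gm G} (A : aut_action Gm G) v g : actV A (actV A v g) (ginv g) = v.
Proof. rewrite <- actVM, gmulVr, actV1. reflexivity. Qed.
Lemma actV_inv2 {Gm G} (A : aut_action Gm G) v g : actV A (actV A v (ginv g)) g = v.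
Proof. rewrite <- actVM, gmulVl, actV1. reflexivity. Qed.
Lemma actE_inv1 {Gm G} (A : aut_action Gm G) v g : actE A (actE A v g) (ginv g) = v.
Proof. rewrite <- actEM, gmulVr, actE1. reflexivity. Qed.
Lemma actE_inv2 {Gm G} (A : aut_action Gm G) v g : actE A (actE A v (ginv g)) g = v.
Proof. rewrite <- actEM, gmulVl, actE1. reflexivity. Qed.
Lemma actV_inj {Gm G} (A : aut_action Gm G) u v g : actV A u g = actV A v g -> u = v.
Proof. intro E. rewrite <- (actV_inv1 A u g), E, actV_inv1. reflexivity. Qed.
Lemma actE_inj {Gm G} (A : aut_action Gm G) u v g : actE A u g = actE A v g -> u = v.
Proof. intro E. rewrite <- (actE_inv1 A u g), E, actE_inv1. reflexivity. Qed.
Lemma inc_act {Gm G} (A : aut_action Gm G) v f g : inc v f -> inc (actV A v g) (actE A f g).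
Proof. apply act_inc. Qed.
Lemma inc_two_eq {Gm : graph} (u v w : Vx Gm) f : inc u f -> inc v f -> u <> v -> inc w f -> w = u \/ w = v.
Proof. intros Hu Hv Huv Hw. destruct (inc_two Gm f) as [p [q [Hpq [_ [_ Hall]]]]].
  destruct (Hall u Hu), (Hall v Hv), (Hall w Hw); subst; try tauto. Qed.
Lemma adj_act {Gm G} (A : aut_action Gm G) u v g : adj u v -> adj (actV A u g) (actV A v g).
Proof. intros [Hne [f [Hu Hv]]]. split.
  - intro E. apply Hne. eapply actV_inj; eauto.
  - exists (actE A f g). split; apply inc_act; auto. Qed.
Lemma vstab_sub {Gm G} (A : aut_action Gm G) v : subgroup (vstab A v).
Proof. unfold vstab. repeat split.
  - apply actV1.
  - intros x y Hx Hy. rewrite actVM, Hx, Hy. reflexivity.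
  - intros x Hx. rewrite <- Hx at 1. apply actV_inv1. Qed.
Lemma estab_sub {Gm G} (A : aut_action Gm G) v : subgroup (estab A v).
Proof. unfold estab. repeat split.
  - apply actE1.
  - intros x y Hx Hy. rewrite actEM, Hx, Hy. reflexivity.
  - intros x Hx. rewrite <- Hx at 1. apply actE_inv1. Qed.

Lemma local_fix {Gm G} (A : aut_action Gm G) (Hrot : vertex_rotary A) v f g :
  inc v f -> actV A v g = v -> actE A f g = f -> forall f', inc v f' -> actE A f' g = f'.
Proof.
  intros Hf Hv Hfg f' Hf'. destruct Hrot as [_ Hloc]. destruct (Hloc v) as [Htr [c [Hc Hcy]]].
  destruct (Htr f f' Hf Hf') as [h [Hh Hff']]. destruct (Hcy g Hv) as [d [Hd Hgd]].
  destruct (Hcy h Hh) as [d' [Hd' Hhd']].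
  rewrite (Hgd f' Hf'). rewrite <- Hff'. rewrite (Hhd' f Hf).
  rewrite <- !actEM, (cyc_comm c d' d Hd' Hd), actEM, <- (Hgd f Hf), Hfg. reflexivity.
Qed.

Lemma arcstab_trivial {Gm G} (A : aut_action Gm G) (Hrot : vertex_rotary A) (Hconn : connected Gm) v f g :
  inc v f -> actV A v g = v -> actE A f g = f -> g = gone.
Proof.
  intros Hf Hv Hfg.
  set (P := fun u => actV A u g = u /\ forall f', inc u f' -> actE A f' g = f').
  assert (Pv : P v) by (split; [exact Hv| exact (local_fix A Hrot v f g Hf Hv Hfg)]).
  assert (Hstep : forall x y, clos_refl_trans _ adj x y -> P x -> P y).
  { intros x y Hxy. induction Hxy as [x y Hadj| x | x y w _ IH1 _ IH2]; auto.
    intros [Px Qx]. destruct Hadj as [Hne [f0 [Hx0 Hy0]]].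
    assert (F0 : actE A f0 g = f0) by auto.
    assert (Hyg : inc (actV A y g) f0) by (rewrite <- F0; apply inc_act; auto).
    destruct (inc_two_eq x y _ f0 Hx0 Hy0 Hne Hyg) as [E|E].
    - exfalso. apply Hne. apply (actV_inj A _ _ g). rewrite Px. auto.
    - split; auto. apply (local_fix A Hrot y f0 g Hy0 E F0). }
  apply act_faithful with (a := A).
  - intro u. apply (Hstep v u (Hconn v u) Pv).
  - intro e. destruct (inc_two Gm e) as [p [q [_ [Hp _]]]]. apply (Hstep v p (Hconn v p) Pv). auto.
Qed.
Lemma min_exists (P : nat -> Prop) n : P n -> exists m, P m /\ forall j, j < m -> ~ P j.
Proof.
  induction n as [n IH] using (well_founded_induction lt_wf). intro Hn.
  destruct (classic (exists j, j < n /\ P j)) as [[j [Hj Pj]]|Hno].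
  - exact (IH j Hj Pj).
  - exists n. split; auto. intros j Hj Pj. apply Hno. eauto.
Qed.

Lemma nodup_map_seq {T} (f : nat -> T) n s :
  (forall i j, s <= i -> i < j -> j < s + n -> f i <> f j) -> NoDup (map f (seq s n)).
Proof.
  revert s. induction n; intros s Hinj; simpl. constructor.
  constructor.
  - rewrite in_map_iff. intros [x [Hx Hin]]. rewrite in_seq in Hin.
    apply (Hinj s x); lia || auto.
  - apply IHn. intros i j Hi Hij Hj. apply Hinj; lia.
Qed.

Lemma pigeon {T} (f : nat -> T) (l : list T) n :
  length l < n -> (forall i, i < n -> In (f i) l) -> exists i j, i < j < n /\ f i = f j.
Proof.
  intros Hlen Hin. apply NNPP. intro Hno.
  assert (ND : NoDup (map f (seq 0 n))).
  { apply nodup_map_seq. intros i j _ Hij Hj E. apply Hno. exists i, j. split; [lia|auto]. }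
  apply NoDup_incl_length with (l' := l) in ND.
  - rewrite length_map, length_seq in ND. lia.
  - intros x Hx. rewrite in_map_iff in Hx. destruct Hx as [i [<- Hi]]. rewrite in_seq in Hi. apply Hin. lia.
Qed.

Lemma card_map_seq {T} (P : T -> Prop) n (f : nat -> T) m :
  has_card P n -> (forall i j, i < j -> j < m -> f i <> f j) ->
  (forall x, P x <-> exists i, i < m /\ x = f i) -> n = m.
Proof.
  intros [l [ND [Hl HP]]] Hinj Hch.
  assert (ND2 : NoDup (map f (seq 0 m))) by (apply nodup_map_seq; intros; apply Hinj; lia).
  assert (I1 : incl l (map f (seq 0 m))).
  { intros x Hx. apply HP in Hx. apply Hch in Hx. destruct Hx as [i [Hi ->]]. apply in_map, in_seq. lia. }
  assert (I2 : incl (map f (seq 0 m)) l).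
  { intros x Hx. rewrite in_map_iff in Hx. destruct Hx as [i [<- Hi]]. rewrite in_seq in Hi.
    apply HP, Hch. exists i. split; [lia|auto]. }
  apply NoDup_incl_length in I1; auto. apply NoDup_incl_length in I2; auto.
  rewrite length_map, length_seq in *. lia.
Qed.
Lemma fix_pow {Gm G} (A : aut_action Gm G) x (g : G) q : actV A x g = x -> actV A x (gpow g q) = x.
Proof. intro Hg. induction q; simpl. apply actV1. rewrite actVM, IHq, Hg. reflexivity. Qed.

Lemma fix_mod {Gm G} (A : aut_action Gm G) x (g : G) d n :
  actV A x (gpow g d) = x -> actV A x (gpow g n) = actV A x (gpow g (n mod d)).
Proof. intro Hd. rewrite (Nat.div_mod_eq n d) at 1. rewrite gpow_add, gpow_mul, actVM, (fix_pow A x (gpow g d) (n/d) Hd). reflexivity. Qed.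

Lemma subgroup_inter {G : group} (K1 K2 : G -> Prop) : subgroup K1 -> subgroup K2 -> subgroup (setI K1 K2).
Proof. intros [A1 [B1 C1]] [A2 [B2 C2]]. unfold setI. repeat split; try tauto; firstorder. Qed.
Theorem lemma3p1 (Gm : graph) (G : group) (A : aut_action Gm G)
  (k lam : nat)
  (Hconn : connected Gm) (Hlf : locally_finite Gm)
  (HE : exists e : Ed Gm, True)
  (Hrot : vertex_rotary A)
  (Hval : valency Gm k) (Hmult : edge_multiplicity Gm lam)
  (alpha beta : Vx Gm) (e : Ed Gm)
  (Hab : adj alpha beta) (Hae : inc alpha e) (Hbe : inc beta e) :
  let H := vstab A alpha in
  let J := estab A e in
  exists a z : G,
    (* (a) *)
    (iso_Cos Gm G H J /\
     (forall g : G, gen2 a z g) /\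
     set_eq H (cyc a) /\ has_order a (k * lam) /\
     set_eq (setI H (conjS H z)) (cyc (gpow a k)) /\ has_order (gpow a k) lam /\
     set_eq J (cyc z) /\ has_order z 2 /\
     set_eq (setI H J) (fun g => g = gone)) /\
    (* (b) *)
    (~ cyc a z /\ ~ cyc a (conjg z a) /\ rotary_pair G a z /\ arc_regular A).
Proof.
  intros H J.
  pose proof Hrot as [Hat Hloc]. pose proof Hab as [Hneq _].
  destruct (Hat alpha e beta e Hae Hbe) as [z [Hz1 Hz2]].
  destruct (Hloc alpha) as [HtrA [c [Hc Hcy]]].
  assert (Htriv : forall v f g, inc v f -> actV A v g = v -> actE A f g = f -> g = gone)
    by (intros; eapply arcstab_trivial; eauto).
  assert (HeqH : forall h, H h <-> cyc c h).
  { intro h; split.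
    - intro Hh. destruct (Hcy h Hh) as [d [Hd Hhd]].
      assert (Hd' : H d) by (apply (gen_min (fun y => y = c) _ (vstab_sub A alpha)); [intros y ->; exact Hc| exact Hd]).
      assert (E : gmul h (ginv d) = gone).
      { apply (Htriv alpha e). exact Hae.
        - apply (vstab_sub A alpha); [exact Hh| apply (vstab_sub A alpha); exact Hd'].
        - rewrite actEM, (Hhd e Hae). apply actE_inv1. }
      replace h with d; [exact Hd|]. symmetry. apply (gmul_cancel_r (ginv d)). rewrite E, gmulVr. reflexivity.
    - apply (gen_min (fun y => y = c) _ (vstab_sub A alpha)). intros y ->. exact Hc. }
  assert (HcH : forall i, H (gpow c i)) by (intro; apply HeqH, cyc_pow).
  assert (Hfin : exists m, 0 < m /\ gpow c m = gone).
  { destruct (Hlf alpha) as [L HL].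
    destruct (pigeon (fun i => actE A e (gpow c i)) L (S (length L))) as [i [j [Hij E]]]; [lia| |].
    - intros i _. apply HL. rewrite <- (HcH i). apply inc_act. exact Hae.
    - exists (j - i). split; [lia|].
      apply (Htriv alpha (actE A e (gpow c i))).
      + rewrite <- (HcH i). apply inc_act. exact Hae.
      + apply HcH.
      + rewrite <- actEM, <- gpow_add, E. f_equal. f_equal. lia. }
  destruct Hfin as [m0 Hm0].
  destruct (min_exists (fun m => 0 < m /\ gpow c m = gone) m0 Hm0) as [N [[HN0 HN1] HNmin]].
  assert (HordN : has_order c N).
  { split; [exact HN0|split; [exact HN1|]]. intros m Hm E. apply (HNmin m); [lia|split; [lia|exact E]]. }
  assert (HHc : forall y, H y <-> exists i, i < N /\ y = gpow c i).
  { intro y; split.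
    - intro Hy. apply (cyc_char c N y HordN). apply HeqH. exact Hy.
    - intros [i [_ ->]]. apply HcH. }
  assert (Hnb : forall u, adj alpha u -> exists h, H h /\ actV A beta h = u).
  { intros u [Hne [f [Ha Hu]]]. destruct (HtrA e f Hae Ha) as [h [Hh Ef]].
    exists h. split; [exact Hh|].
    assert (Hi : inc (actV A u (ginv h)) e).
    { rewrite <- (actE_inv1 A e h), Ef. apply inc_act. exact Hu. }
    destruct (inc_two_eq alpha beta _ e Hae Hbe Hneq Hi) as [E|E].
    - exfalso. apply Hne. rewrite <- (actV_inv2 A u h), E. symmetry. exact Hh.
    - rewrite <- E. apply actV_inv2. }
  destruct (min_exists (fun m => 0 < m /\ actV A beta (gpow c m) = beta) N) as [d [[Hd0 Hd1] Hdmin]].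
  { split; [exact HN0|]. rewrite HN1. apply actV1. }
  assert (Hdiv : forall i, actV A beta (gpow c i) = beta <-> i mod d = 0).
  { intro i. rewrite (fix_mod A beta c d i Hd1). split.
    - intro E. apply NNPP. intro Hne. apply (Hdmin (i mod d)); [apply Nat.mod_upper_bound; lia|]. split; [lia|exact E].
    - intro E. rewrite E. apply actV1. }
  assert (Hkd : k = d).
  { apply (card_map_seq _ k (fun i => actV A beta (gpow c i)) d (Hval alpha)).
    - intros i j Hij Hj E. apply (Hdmin (j - i)); [lia|]. split; [lia|].
      apply (actV_inj A _ _ (gpow c i)). rewrite <- actVM, <- gpow_add.
      replace (j - i + i) with j by lia. symmetry. exact E.
    - intro x. split.
      + intro Hx. destruct (Hnb x Hx) as [h [Hh Ex]]. apply HHc in Hh. destruct Hh as [i [_ ->]].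
        exists (i mod d). split; [apply Nat.mod_upper_bound; lia|]. rewrite <- Ex. apply fix_mod. exact Hd1.
      + intros [i [_ ->]]. rewrite <- (HcH i) at 1. apply adj_act. exact Hab. }
  subst k.
  assert (HNd : N = d * (N / d)).
  { pose proof (Nat.div_mod_eq N d). assert (N mod d = 0) by (apply Hdiv; rewrite HN1; apply actV1). lia. }
  set (q := N / d) in *.
  assert (Hlq : lam = q).
  { apply (card_map_seq _ lam (fun j => actE A e (gpow c (d * j))) q (Hmult alpha beta Hab)).
    - intros i j Hij Hj E. apply (HNmin (d * (j - i))); [nia|]. split; [nia|].
      apply (Htriv alpha (actE A e (gpow c (d * i)))).
      + rewrite <- (HcH (d * i)). apply inc_act. exact Hae.
      + apply HcH.
      + rewrite <- actEM, <- gpow_add, E. f_equal. f_equal. nia.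
    - intro x. split.
      + intros [Ha Hb]. destruct (HtrA e x Hae Ha) as [h [Hh Ex]].
        pose proof Hh as Hh'. apply HHc in Hh'. destruct Hh' as [i [Hi Ehi]].
        assert (Hi2 : inc (actV A beta (ginv h)) e).
        { rewrite <- (actE_inv1 A e h), Ex. apply inc_act. exact Hb. }
        assert (Hbh : actV A beta h = beta).
        { destruct (inc_two_eq alpha beta _ e Hae Hbe Hneq Hi2) as [E|E].
          - exfalso. apply Hneq. rewrite <- (actV_inv2 A beta h), E. symmetry. exact Hh.
          - rewrite <- E at 1. apply actV_inv2. }
        rewrite Ehi in Hbh. apply Hdiv in Hbh.
        exists (i / d). split; [apply Nat.Div0.div_lt_upper_bound; lia|].
        rewrite <- Ex, Ehi. f_equal. f_equal. pose proof (Nat.div_mod_eq i d). lia.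
      + intros [j [_ ->]]. split.
        * rewrite <- (HcH (d * j)) at 1. apply inc_act. exact Hae.
        * assert (Eb : actV A beta (gpow c (d * j)) = beta) by (apply Hdiv; rewrite Nat.mul_comm; apply Nat.Div0.mod_mul).
          rewrite <- Eb at 1. apply inc_act. exact Hbe. }
  subst lam. rewrite <- HNd.

  assert (Hgc : forall h, H h -> gen2 c z h).
  { intros h Hh. apply HeqH in Hh. revert Hh. apply (gen_min (fun y => y = c)). apply gen_sub.
    intros y ->. apply gen_incl. left. reflexivity. }
  assert (Hgz : gen2 c z z) by (apply gen_incl; right; reflexivity).
  pose proof (gen_sub (fun y => y = c \/ y = z)) as [Hg1 [HgM HgI]].
  assert (Hreach : forall v, exists g, gen2 c z g /\ actV A alpha g = v).
  { intro v. assert (Hst : forall x y, clos_refl_trans _ adj x y ->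
       (exists g, gen2 c z g /\ actV A alpha g = x) -> (exists g, gen2 c z g /\ actV A alpha g = y)).
    { intros x y Hxy. induction Hxy as [x y Hadj| x | x y w _ IH1 _ IH2]; auto.
      intros [g [Hg Ex]].
      assert (Had : adj alpha (actV A y (ginv g))).
      { rewrite <- (actV_inv1 A alpha g), Ex. apply adj_act. exact Hadj. }
      destruct (Hnb _ Had) as [h [Hh Eh]].
      exists (gmul (gmul z h) g). split.
      - apply HgM; [apply HgM; [exact Hgz| apply Hgc; exact Hh]| exact Hg].
      - rewrite !actVM, Hz1, Eh. apply actV_inv2. }
    apply (Hst alpha v (Hconn alpha v)). exists gone. split; [exact Hg1| apply actV1]. }
  assert (Hgen : forall g, gen2 c z g).
  { intro g. destruct (Hreach (actV A alpha g)) as [g0 [Hg0 E0]].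
    assert (Hh : H (gmul g (ginv g0))) by (unfold H, vstab; rewrite actVM, <- E0; apply actV_inv1).
    replace g with (gmul (gmul g (ginv g0)) g0) by (rewrite <- gmulA, gmulVl, gmul1r; reflexivity).
    apply HgM; [apply Hgc; exact Hh| exact Hg0]. }
  assert (Hedge : forall f, exists y, actE A e y = f).
  { intro f. destruct (inc_two Gm f) as [p [_ [_ [Hp _]]]]. destruct (Hat alpha e p f Hae Hp) as [y [_ Ey]]. eauto. }
  assert (HJ : forall g, J g <-> g = gone \/ g = z).
  { intro g; split.
    - intro Hg. unfold J, estab in Hg.
      assert (Hi : inc (actV A alpha g) e) by (rewrite <- Hg; apply inc_act; exact Hae).
      destruct (inc_two_eq alpha beta _ e Hae Hbe Hneq Hi) as [E|E].
      + left. apply (Htriv alpha e g Hae E Hg).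
      + right. assert (E2 : gmul g (ginv z) = gone).
        { apply (Htriv alpha e _ Hae).
          - rewrite actVM, E, <- Hz1. apply actV_inv1.
          - rewrite actEM, Hg. rewrite <- Hz2 at 1. apply actE_inv1. }
        apply (gmul_cancel_r (ginv z)). rewrite E2, gmulVr. reflexivity.
    - intros [->| ->]; [apply actE1| exact Hz2]. }
  assert (Hzne : z <> gone) by (intro E; apply Hneq; rewrite <- Hz1, E; symmetry; apply actV1).
  assert (Hzz : gmul z z = gone).
  { assert (Jzz : J (gmul z z)) by (apply (estab_sub A e); exact Hz2).
    apply HJ in Jzz. destruct Jzz as [E|E]; auto. exfalso. apply Hzne.
    apply (gmul_cancel_l z). rewrite E, gmul1r. reflexivity. }
  assert (Hord2 : has_order z 2).
  { split; [lia|split].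
    - simpl. rewrite gmul1l. exact Hzz.
    - intros m Hm. replace m with 1 by lia. simpl. rewrite gmul1l. exact Hzne. }
  assert (HzH : ~ H z) by (intro Hz; apply Hneq; rewrite <- Hz1; symmetry; exact Hz).
  assert (HordN' : has_order c N) by exact HordN.
  exists c, z. split; [split; [|split; [exact Hgen|split; [|split; [exact HordN|split; [|split; [|split; [|split; [exact Hord2|]]]]]]]]|].
  -
    exists (fun v => fun g => actV A alpha g = v), (fun f => fun g => actE A e g = f).
    assert (RV : forall v x, actV A alpha x = v -> (fun g => actV A alpha g = v) = rcoset H x).
    { intros v x Ex. apply functional_extensionality. intro g. apply propositional_extensionality. split.
      - intro Eg. exists (gmul g (ginv x)). split.
        + unfold H, vstab. rewrite actVM, Eg, <- Ex. apply actV_inv1.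
        + rewrite <- gmulA, gmulVl, gmul1r. reflexivity.
      - intros [h [Hh ->]]. rewrite actVM, Hh. exact Ex. }
    assert (RE : forall f y, actE A e y = f -> (fun g => actE A e g = f) = rcoset J y).
    { intros f y Ey. apply functional_extensionality. intro g. apply propositional_extensionality. split.
      - intro Eg. exists (gmul g (ginv y)). split.
        + unfold J, estab. rewrite actEM, Eg, <- Ey. apply actE_inv1.
        + rewrite <- gmulA, gmulVl, gmul1r. reflexivity.
      - intros [h [Hh ->]]. rewrite actEM, Hh. exact Ey. }
    assert (RV' : forall v x, (fun g => actV A alpha g = v) = rcoset H x -> actV A alpha x = v).
    { intros v x E. change ((fun g => actV A alpha g = v) x). rewrite E. exists gone. split; [apply actV1| symmetry; apply gmul1l]. }
    assert (RE' : forall f y, (fun g => actE A e g = f) = rcoset J y -> actE A e y = f).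
    { intros f y E. change ((fun g => actE A e g = f) y). rewrite E. exists gone. split; [apply actE1| symmetry; apply gmul1l]. }
    split; [|split; [|split; [|split; [|split; [|split]]]]].
    + intros u v E. destruct (Hreach u) as [x [_ Ex]]. rewrite <- Ex. change ((fun g => actV A alpha g = v) x). rewrite <- E. exact Ex.
    + intro v. destruct (Hreach v) as [x [_ Ex]]. exists x. apply RV. exact Ex.
    + intro x. exists (actV A alpha x). apply RV. reflexivity.
    + intros u v E. destruct (Hedge u) as [x Ex]. rewrite <- Ex. change ((fun g => actE A e g = v) x). rewrite <- E. exact Ex.
    + intro v. destruct (Hedge v) as [x Ex]. exists x. apply RE. exact Ex.
    + intro x. exists (actE A e x). apply RE. reflexivity.
    + intros v f. split.
      * intro Hvf. destruct (Hreach v) as [x [_ Ex]]. destruct (Hedge f) as [y Ey].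
        exists x, y. split; [apply RV; exact Ex|split; [apply RE; exact Ey|]].
        assert (Hi : inc alpha (actE A e (gmul y (ginv x)))).
        { rewrite <- (actV_inv1 A alpha x), Ex, actEM, Ey. apply inc_act. exact Hvf. }
        destruct (HtrA e _ Hae Hi) as [h [Hh Eh]].
        exists (gmul (gmul y (ginv x)) (ginv h)), h. split; [|split; [exact Hh|]].
        -- unfold J, estab. rewrite actEM, <- Eh. apply actE_inv1.
        -- rewrite <- gmulA, gmulVl, gmul1r. reflexivity.
      * intros [x [y [Ex [Ey [j [h [Hj [Hh E]]]]]]]].
        apply RV' in Ex. apply RE' in Ey. rewrite <- Ex, <- Ey.
        replace y with (gmul (gmul y (ginv x)) x) by (rewrite <- gmulA, gmulVl, gmul1r; reflexivity).
        rewrite actEM. apply inc_act. rewrite E, actEM, Hj. rewrite <- (Hh : actV A alpha h = alpha) at 1. apply inc_act. exact Hae.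
  - intro y. exact (HeqH y).
  -
    assert (Hcz : forall y, conjS H z y <-> actV A beta y = beta).
    { intro y. split.
      - intros [h [Hh ->]]. unfold conjg. rewrite !actVM, <- Hz1, actV_inv1, Hh. reflexivity.
      - intro Ey. exists (gmul z (gmul y (ginv z))). split.
        + unfold H, vstab. rewrite !actVM, Hz1, Ey, <- Hz1. apply actV_inv1.
        + unfold conjg. rewrite !gmulA, gmulVl, gmul1l, <- !gmulA, gmulVl, gmul1r. reflexivity. }
    intro y. split.
    + intros [Hy Hy2]. apply Hcz in Hy2. apply HHc in Hy. destruct Hy as [i [_ ->]].
      apply Hdiv in Hy2. rewrite (Nat.div_mod_eq i d), Hy2, Nat.add_0_r, gpow_mul. apply cyc_pow.
    + apply (gen_min (fun w => w = gpow c d) (setI H (conjS H z))).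
      * assert (subgroup (setI H (fun y => actV A beta y = beta))) as [S1 [S2 S3]]
          by (apply subgroup_inter; [apply vstab_sub| apply (vstab_sub A beta)]).
        unfold setI in *. split; [|split].
        -- split; [exact (proj1 S1)| apply Hcz; exact (proj2 S1)].
        -- intros p r [Hp Hp'] [Hr Hr']. rewrite Hcz in Hp', Hr'. destruct (S2 p r (conj Hp Hp') (conj Hr Hr')). split; auto. apply Hcz; auto.
        -- intros p [Hp Hp']. rewrite Hcz in Hp'. destruct (S3 p (conj Hp Hp')). split; auto. apply Hcz; auto.
      * intros w ->. split; [apply HcH| apply Hcz, Hdiv, Nat.Div0.mod_same].
  -
    split; [nia|split].
    + rewrite <- gpow_mul, <- HNd. exact HN1.
    + intros m Hm E. rewrite <- gpow_mul in E. apply (HNmin (d * m)); [nia|split; [nia|exact E]].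
  - intro y. split.
    + intro Hy. apply HJ in Hy. destruct Hy as [->| ->].
      * apply (gen_sub (fun w => w = z)).
      * apply gen_incl. reflexivity.
    + apply (gen_min (fun w => w = z) _ (estab_sub A e)). intros w ->. exact Hz2.
  - intro y. split.
    + intros [Hy Hy2]. exact (Htriv alpha e y Hae Hy Hy2).
    + intros ->. split; [apply actV1|apply actE1].
  - split; [|split; [|split]].
    + intro Hc'. apply HzH. apply HeqH. exact Hc'.
    + intro Hc'. apply HeqH in Hc'. unfold H, vstab, conjg in Hc'.
      rewrite !actVM in Hc'. apply Hneq.
      assert (Ea : actV A alpha (ginv c) = alpha) by (apply (vstab_sub A alpha); exact Hc).
      rewrite Ea, Hz1 in Hc'. apply (actV_inj A _ _ c). rewrite Hc'. exact Hc.
    + split; [exact Hgen|split; [exists N; exact HordN|split; [exact Hord2|]]].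
      intro Hc'. apply HzH. apply HeqH. exact Hc'.
    + intros v f v' f' Hvf Hvf'. destruct (Hat v f v' f' Hvf Hvf') as [g [Eg1 Eg2]].
      exists g. split; [split; auto|].
      intros g' [E1 E2].
      assert (Ex : gmul (ginv g) g' = gone).
      { apply (Htriv v' f' _ Hvf').
        - rewrite actVM, <- Eg1, actV_inv1, Eg1. exact E1.
        - rewrite actEM, <- Eg2, actE_inv1, Eg2. exact E2. }
      apply (gmul_cancel_l (ginv g)). rewrite Ex, gmulVl. reflexivity.
Qed.
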